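(* Let $\dot{\mathcal C}$ be a colored chain on vertices $Z_1\subset Z_2\subset\dots\subset Z_t$, where $Z_i$ has color $c_i$, and let $\bar c_i$ denote the color other than $c_i$. Fix a blue/red coloring of a Boolean lattice $\mathcal Q$ which contains no copy of $\dot{\mathcal C}$. Then: (i) every $Z\in\Phi_1$ has color $\bar c_1$; (ii) for $2\le i\le t$, if $c_i\ne c_{i-1}$, then every $Z\in\Phi_i$ has color $\bar c_i$; (iii) for $2\le i\le t$, if $c_i=c_{i-1}$, then every vertex of $M_i$ has color $c_i$ and every vertex of $\Phi_i\setminus M_i$ has color $\bar c_i$.
   Context: A Boolean lattice $\mathcal Q=\mathcal Q(\mathcal Z)$ is the poset of all subsets of a finite set $\mathcal Z$ ordered by inclusion; for $X\in\mathcal Q$, $\mathcal Q|_\varnothing^X=\{Y\in\mathcal Q: Y\subseteq X\}$, with the inherited coloring. In a colored poset, a copy of a colored poset $\dot P$ is an induced subposet isomorphic to $P$ with each vertex having the color of the corresponding vertex of $\dot P$. For $0\le i\le t$, $\dot{\mathcal C}[i]$ is the colored subchain $Z_1,\dots,Z_i$ of $\dot{\mathcal C}$ (with $\dot{\mathcal C}[0]$ empty). The phase of $X\in\mathcal Q$ is $\varphi(X)=\max\{i\in\{1,\dots,t+1\}: \mathcal Q|_\varnothing^X \text{ contains a copy of } \dot{\mathcal C}[i-1]\}$. $\Phi_i=\{X\in\mathcal Q:\varphi(X)=i\}$ and $M_i$ is the set of minimal elements (w.r.t. inclusion) of $\Phi_i$. *)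

(* Defs.v *)
From mathcomp Require Import all_boot.
Set Implicit Arguments. Unset Strict Implicit. Unset Printing Implicit Defensive.

(* The Boolean lattice Q(Z) is {set T} for a finite type T (Z = [set: T]).
   A colored chain C = (Z_1 ⊂ ... ⊂ Z_t) with colors c_1..c_t is the
   sequence c : seq bool (t = size c, c_i = nth false c (i-1)). *)

Definition has_copy (T : finType) (col : {set T} -> bool) (cs : seq bool)
    (X : {set T}) : bool :=
  [exists f : {ffun 'I_(size cs) -> {set T}},
     [forall j : 'I_(size cs), (f j \subset X) && (col (f j) == nth false cs j)] &&
     [forall j : 'I_(size cs), forall k : 'I_(size cs), (j < k)%N ==> (f j \proper f k)]].

(* phase φ(X) = max { i ∈ {1..t+1} : Q|^X contains a copy of C[i-1] },
   where C[i-1] = take (i-1) c. *)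
Definition phase (T : finType) (col : {set T} -> bool) (c : seq bool)
    (X : {set T}) : nat :=
  \max_(i < (size c).+2 | (0 < i)%N && has_copy col (take i.-1 c) X) i.

(* Φ_i membership is phase col c X = i; M_i = minimal elements of Φ_i. *)
Definition in_M (T : finType) (col : {set T} -> bool) (c : seq bool)
    (i : nat) (X : {set T}) : bool :=
  minset (fun Y => phase col c Y == i) X.

(* Main.v *)
Require Import Defs.
From mathcomp Require Import all_boot.

Section Helpers.
Variables (T : finType) (col : {set T} -> bool).

Definition chain_in (cs : seq bool) (X : {set T}) (f : nat -> {set T}) :=
  (forall j, (j < size cs)%N -> f j \subset X /\ col (f j) = nth false cs j) /\
  (forall j k, (j < k)%N -> (k < size cs)%N -> f j \proper f k).

Lemma hasP cs X : has_copy col cs X <-> exists f, chain_in cs X f.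
Proof.
split.
- case/existsP => F /andP [/forallP H1 /forallP H2].
  exists (fun n => if insub n is Some j then F j else set0); split.
  + move=> j hj; case: insubP => [j' _ ej|]; last by rewrite /= hj.
    by case/andP: (H1 j') => ? /eqP; rewrite ej.
  + move=> j k jk hk; case: insubP => [j' _ ej|]; last by rewrite /= (ltn_trans jk hk).
    case: insubP => [k' _ ek|]; last by rewrite /= hk.
    by have /forallP/(_ k')/implyP := H2 j'; apply; rewrite ej ek.
- case=> f [H1 H2]; apply/existsP; exists [ffun j => f (val j)].
  apply/andP; split; apply/forallP => j.
  + by rewrite ffunE; case: (H1 _ (ltn_ord j)) => -> ->; rewrite eqxx.
  + apply/forallP => k; apply/implyP => jk; rewrite !ffunE; exact: H2 jk (ltn_ord k).
Qed.

Lemma ext0 cs b (Z : {set T}) f : chain_in cs Z f ->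
  (forall j, (j < size cs)%N -> f j \proper Z) -> col Z = b ->
  has_copy col (rcons cs b) Z.
Proof.
move=> [H1 H2] Hp cZ; apply/hasP.
exists (fun n => if (n < size cs)%N then f n else Z); split.
- move=> j; rewrite size_rcons ltnS nth_rcons leq_eqVlt.
  case/orP => [/eqP ->|hj]; first by rewrite ltnn eqxx.
  by rewrite hj; case: (H1 _ hj).
- move=> j k jk; rewrite size_rcons ltnS leq_eqVlt; case/orP => [/eqP ek|hk]; first subst k.
  + by rewrite ltnn jk; apply: Hp.
  + by rewrite hk (ltn_trans jk hk); apply: H2.
Qed.

Lemma ext1 cs b (Y Z : {set T}) : has_copy col cs Y -> Y \proper Z -> col Z = b ->
  has_copy col (rcons cs b) Z.
Proof.
case/hasP => f [H1 H2] YZ cZ; apply: (ext0 _ _ _ f) => //.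
- split => //; move=> j hj; case: (H1 _ hj) => s ->; split => //.
  exact: (subset_trans s (proper_sub YZ)).
- by move=> j hj; case: (H1 _ hj) => s _; apply: sub_proper_trans s YZ.
Qed.

Lemma split_last cs b (X : {set T}) : has_copy col (rcons cs b) X ->
  exists Y : {set T}, [/\ Y \subset X, col Y = b & has_copy col (rcons cs b) Y].
Proof.
case/hasP => f [H1 H2].
have hs : (size cs < size (rcons cs b))%N by rewrite size_rcons.
case: (H1 _ hs) => s; rewrite nth_rcons ltnn eqxx => cY.
exists (f (size cs)); split => //; apply/hasP; exists f; split => //.
move=> j hj; case: (H1 _ hj) => _ ->; split => //.
move: hj; rewrite size_rcons ltnS leq_eqVlt; case/orP => [/eqP ->//|hj].
by apply: proper_sub; apply: H2.
Qed.

Lemma has_mono cs (X Y : {set T}) : X \subset Y -> has_copy col cs X -> has_copy col cs Y.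
Proof.
move=> XY /hasP [f [H1 H2]]; apply/hasP; exists f; split => //.
move=> j hj; case: (H1 _ hj) => s ->; split => //; exact: subset_trans s XY.
Qed.

Variable c : seq bool.

Lemma phase_ge i X : (0 < i)%N -> (i <= (size c).+1)%N ->
  has_copy col (take i.-1 c) X -> (i <= phase col c X)%N.
Proof.
move=> i0 ic h; rewrite /phase.
have ii : (i < (size c).+2)%N by [].
by apply: (@leq_bigmax_cond _ _ _ (Ordinal ii)) => /=; rewrite i0 h.
Qed.

Lemma phase_att X : let n := phase col c X in
  n = 0 \/ [/\ (0 < n)%N, (n <= (size c).+1)%N & has_copy col (take n.-1 c) X].
Proof.
rewrite /phase /=.
apply: (big_ind (fun n => n = 0 \/ [/\ (0 < n)%N, (n <= (size c).+1)%N
   & has_copy col (take n.-1 c) X])); first by left.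
- move=> x y hx hy; case: (leqP x y) => h.
  + by [].
  + by [].
- move=> i /andP [i0 h]; right; split => //; by rewrite -ltnS.
Qed.

Lemma phase_mono (X Y : {set T}) : X \subset Y -> (phase col c X <= phase col c Y)%N.
Proof.
move=> XY; case: (phase_att X) => [->//|[h1 h2 h3]].
by apply: phase_ge => //; apply: has_mono XY h3.
Qed.

End Helpers.

Theorem proposition14 (T : finType) (c : seq bool) (col : {set T} -> bool) :
  ~~ has_copy col c [set: T] ->
  (forall Z : {set T}, phase col c Z = 1%N -> col Z = ~~ nth false c 0) /\
  (forall i : nat, (2 <= i <= size c)%N ->
     nth false c i.-1 != nth false c i.-2 ->
     forall Z : {set T}, phase col c Z = i -> col Z = ~~ nth false c i.-1) /\
  (forall i : nat, (2 <= i <= size c)%N ->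
     nth false c i.-1 = nth false c i.-2 ->
     forall Z : {set T}, phase col c Z = i ->
       (in_M col c i Z -> col Z = nth false c i.-1) /\
       (~~ in_M col c i Z -> col Z = ~~ nth false c i.-1)).
Proof.
move=> nH.
have sc : (0 < size c)%N.
  move: nH; case: c => // /negP; case; apply/existsP.
  by exists [ffun j => set0]; apply/andP; split; apply/forallP => [[]].
have Hatt : forall Z i, phase col c Z = i -> (0 < i)%N ->
    has_copy col (take i.-1 c) Z.
  move=> Z i <- i0; case: (@phase_att T col c Z) => [h|[_ _ //]].
  by rewrite h in i0.
have Hnot : forall Z i, phase col c Z = i -> (i <= size c)%N ->
    ~~ has_copy col (take i c) Z.
  move=> Z i pZ ic; apply/negP => h.
  have := @phase_ge T col c i.+1 Z (ltn0Sn _) ic h.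
  by rewrite pZ ltnn.
have Htake : forall i, (0 < i)%N -> (i <= size c)%N ->
    take i c = rcons (take i.-1 c) (nth false c i.-1).
  move=> [|i] // _ ic /=; exact: take_nth.
split; [|split].
- move=> Z pZ; suff: col Z != nth false c 0 by case: (col Z); case: (nth false c 0).
  apply/negP => cZ.
  have := Hnot Z 1 pZ sc; rewrite Htake //= => /negP; apply.
  apply: (@ext0 T col _ _ _ (fun _ => set0)); [by rewrite take0; split | by rewrite take0 | by move/eqP: cZ].
- move=> i /andP [i2 ic] neq Z pZ; suff: col Z != nth false c i.-1 by case: (col Z); case: (nth false c i.-1).
  apply/negP => /eqP cZ.
  have i0 : (0 < i.-1)%N by move: i2; case: (i) => [|[]].
  have := Hatt Z i pZ (ltnW i2); rewrite Htake //; last first.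
    by apply: leq_trans (leq_pred _) ic.
  case/(@split_last T col) => Y [YZ cY hY].
  have pYZ : Y \proper Z.
    rewrite properEneq YZ andbT; apply/eqP => e; move: neq; rewrite -cZ -cY e.
    by rewrite eqxx.
  have ic1 : (i.-1 <= size c)%N by apply: leq_trans (leq_pred _) ic.
  rewrite -Htake // in hY.
  have := Hnot Z i pZ ic; rewrite (Htake i (ltnW i2) ic) => /negP; apply.
  exact: (@ext1 T col _ _ Y Z hY pYZ cZ).
- move=> i /andP [i2 ic] eqc Z pZ.
  have ic1 : (i.-1 <= size c)%N by apply: leq_trans (leq_pred _) ic.
  have i0 : (0 < i.-1)%N by move: i2; case: (i) => [|[]].
  split.
  + move/minsetP => [_ Hmin].
    have := Hatt Z i pZ (ltnW i2); rewrite Htake //.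
    case/(@split_last T col) => Y [YZ cY hY]; rewrite -Htake // in hY.
    have pY : phase col c Y = i.
      apply/eqP; rewrite eqn_leq -{1}pZ (@phase_mono T col c Y Z YZ) /=.
      exact: (@phase_ge T col c i Y (ltnW i2) (leqW ic) hY).
    rewrite -(Hmin Y _ YZ) ?cY ?eqc //; by apply/eqP.
  + move=> nM; suff: col Z != nth false c i.-1 by case: (col Z); case: (nth false c i.-1).
    apply/negP => /eqP cZ.
    case: (boolP [exists Y : {set T}, [&& phase col c Y == i, Y \subset Z & Y != Z]]).
    * case/existsP => Y /and3P [/eqP pY YZ nYZ].
      have pYZ : Y \proper Z by rewrite properEneq YZ nYZ.
      have hY := Hatt Y i pY (ltnW i2).
      have := Hnot Z i pZ ic; rewrite (Htake i (ltnW i2) ic) => /negP; apply.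
      exact: (@ext1 T col _ _ Y Z hY pYZ cZ).
    * move/existsPn => h; case/negP: nM; apply/minsetP; split; first by apply/eqP.
      move=> B /eqP pB BZ; apply/eqP; apply/negPn/negP => nBZ.
      by have := h B; rewrite pB eqxx BZ nBZ.
Qed.
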